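(* Let $P,P',Q,S$ be programs and $B$ a Boolean expression such that $P'\equiv_B(P,B)$ and $Q\equiv_B(P,\neg B)$. If the operational triple $\{|P'|\}\ S\ \{|P|\}$ holds, then $\{|P|\}\ \mathbf{while}\ (B)\ \mathbf{do}\ S\ \mathbf{elihw}\ \{|Q|\}$ holds.
   Context: Programs are statements of a sequential imperative language with a standard small-step operational semantics over program states. $\mathrm{behs}(P)$ is the set of pairs (initial state, final state) of finite terminating executions of $P$; $(s,u)\in\mathrm{behs}(P;Q)$ iff there is $t$ with $(s,t)\in\mathrm{behs}(P)$ and $(t,u)\in\mathrm{behs}(Q)$. For a state $s$ and Boolean expression $B$, $s(B)\in\{\mathit{tt},\mathit{ff}\}$ is the (side-effect-free) value of $B$ in $s$. The loop $\mathbf{while}\ (B)\ \mathbf{do}\ S\ \mathbf{elihw}$ started in state $s$ terminates in $s$ if $s(B)=\mathit{ff}$, and otherwise executes $S$ and then repeats the loop from the resulting state. The post-state set is $\mathrm{pst}(P)=\{t:\exists s,\ (s,t)\in\mathrm{behs}(P)\}$. The operational triple $\{|P|\}\ S\ \{|Q|\}$ means $\mathrm{pst}(P;S)\subseteq\mathrm{pst}(Q)$. For programs $P',P$ and Boolean expression $B$, $P'\equiv_B(P,B)$ means $\mathrm{pst}(P')=\mathrm{pst}(P)\cap\{s : s(B)=\mathit{tt}\}$. *)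

(* Defs.v *)
From Stdlib Require Import ZArith Relations.
Open Scope Z_scope.

Definition state := nat -> Z.

Inductive aexp : Type :=
  | ANum (n : Z)
  | AVar (x : nat)
  | APlus (a1 a2 : aexp)
  | AMinus (a1 a2 : aexp)
  | AMult (a1 a2 : aexp).

Inductive bexp : Type :=
  | BTrue
  | BFalse
  | BEq (a1 a2 : aexp)
  | BLe (a1 a2 : aexp)
  | BNot (b : bexp)
  | BAnd (b1 b2 : bexp)
  | BOr (b1 b2 : bexp).

Fixpoint aeval (s : state) (a : aexp) : Z :=
  match a with
  | ANum n => n
  | AVar x => s x
  | APlus a1 a2 => aeval s a1 + aeval s a2
  | AMinus a1 a2 => aeval s a1 - aeval s a2
  | AMult a1 a2 => aeval s a1 * aeval s a2
  end.

Fixpoint beval (s : state) (b : bexp) : bool :=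
  match b with
  | BTrue => true
  | BFalse => false
  | BEq a1 a2 => Z.eqb (aeval s a1) (aeval s a2)
  | BLe a1 a2 => Z.leb (aeval s a1) (aeval s a2)
  | BNot b => negb (beval s b)
  | BAnd b1 b2 => andb (beval s b1) (beval s b2)
  | BOr b1 b2 => orb (beval s b1) (beval s b2)
  end.

Definition update (s : state) (x : nat) (v : Z) : state :=
  fun y => if Nat.eqb y x then v else s y.

Inductive stmt : Type :=
  | Skip
  | Assign (x : nat) (a : aexp)
  | Seq (c1 c2 : stmt)
  | If (b : bexp) (c1 c2 : stmt)
  | While (b : bexp) (c : stmt).

Inductive step : stmt * state -> stmt * state -> Prop :=
  | st_assign : forall x a s,
      step (Assign x a, s) (Skip, update s x (aeval s a))
  | st_seq_skip : forall c2 s,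
      step (Seq Skip c2, s) (c2, s)
  | st_seq : forall c1 c1' c2 s s',
      step (c1, s) (c1', s') ->
      step (Seq c1 c2, s) (Seq c1' c2, s')
  | st_if_true : forall b c1 c2 s,
      beval s b = true -> step (If b c1 c2, s) (c1, s)
  | st_if_false : forall b c1 c2 s,
      beval s b = false -> step (If b c1 c2, s) (c2, s)
  | st_while_false : forall b c s,
      beval s b = false -> step (While b c, s) (Skip, s)
  | st_while_true : forall b c s,
      beval s b = true -> step (While b c, s) (Seq c (While b c), s).

Definition steps := clos_refl_trans (stmt * state) step.

Definition behs (P : stmt) (s t : state) : Prop := steps (P, s) (Skip, t).

Definition pst (P : stmt) (t : state) : Prop := exists s, behs P s t.

(* Operational triple {|P|} S {|Q|} :  pst(P;S) ⊆ pst(Q). *)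
Definition op_triple (P S Q : stmt) : Prop :=
  forall t, pst (Seq P S) t -> pst Q t.

(* P' ≡_B (P,B) :  pst(P') = pst(P) ∩ { s | s(B) = tt }. *)
Definition equiv_B (P' P : stmt) (B : bexp) : Prop :=
  forall t, pst P' t <-> (pst P t /\ beval t B = true).

(* Main.v *)
Require Import Defs.
From Stdlib Require Import Relations Relation_Operators Operators_Properties.

Lemma seq_lift : forall x y, steps x y -> forall c2,
  steps (Seq (fst x) c2, snd x) (Seq (fst y) c2, snd y).
Proof.
  intros x y H; induction H; intros c2.
  - destruct x as [a b], y as [c d]; simpl. apply rt_step. constructor; auto.
  - apply rt_refl.
  - eapply rt_trans; [apply IHclos_refl_trans1 | apply IHclos_refl_trans2].
Qed.

Lemma seq_comp : forall c1 c2 s m t,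
  steps (c1, s) (Skip, m) -> steps (c2, m) (Skip, t) -> steps (Seq c1 c2, s) (Skip, t).
Proof.
  intros. eapply rt_trans. apply (seq_lift _ _ H c2).
  simpl. eapply rt_trans. apply rt_step. constructor. auto.
Qed.

Lemma skip_stuck : forall s y, ~ step (Skip, s) y.
Proof. intros s y H; inversion H. Qed.

Lemma skip_rt : forall x y, clos_refl_trans_1n _ step x y -> forall s, x = (Skip, s) -> y = x.
Proof.
  intros x y H; destruct H; intros s0 E; subst; auto.
  exfalso; eapply skip_stuck; eauto.
Qed.

Theorem theorem1 (P P' Q S : stmt) (B : bexp) :
  equiv_B P' P B ->
  equiv_B Q P (BNot B) ->
  op_triple P' S P ->
  op_triple P (While B S) Q.
Proof.
  intros H1 H2 H3 t [s Hs].
  apply H2.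
  set (Inv := fun (x : stmt * state) =>
    (fst x = While B S /\ pst P (snd x)) \/
    exists c1, fst x = Seq c1 (While B S) /\
      forall m, steps (c1, snd x) (Skip, m) -> pst P m).
  assert (K : forall x y, clos_refl_trans_1n _ step x y -> y = (Skip, t) -> Inv x ->
            pst P t /\ beval t (BNot B) = true).
  { intros x y H; induction H; intros Ey HI; subst.
    - destruct HI as [[E _]|[c1 [E _]]]; simpl in E; discriminate.
    - destruct HI as [[E HP]|[c1 [E HI]]]; destruct x as [c u]; simpl in *; subst.
      + inversion H; subst.
        * pose proof (skip_rt _ _ H0 u eq_refl) as E. inversion E; subst.
          split; auto. simpl. match goal with h : beval _ B = false |- _ => rewrite h end; auto.
        * apply IHclos_refl_trans_1n; auto. right. exists S. split; auto.
          simpl. intros m Hm.   assert (Hb : beval u B = true) by assumption; destruct (proj2 (H1 u) (conj HP Hb)) as [s0 Hs0].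
          apply H3. exists s0. unfold behs. eapply seq_comp; eauto.
      + inversion H; subst.
        * apply IHclos_refl_trans_1n; auto. left. simpl. split; auto.
          apply HI. apply rt_refl.
        * apply IHclos_refl_trans_1n; auto. right. exists c1'. simpl. split; auto.
          intros m Hm. apply HI. eapply rt_trans; [apply rt_step; eauto| exact Hm]. }
  apply (K _ _ (proj1 (clos_rt_rt1n_iff _ _ _ _) Hs) eq_refl).
  right. exists P. split; auto. simpl. intros m Hm. exists s. exact Hm.
Qed.
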